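(* Let $\phi$ be an LTL formula. Every tableau for $\phi$ constructed according to the rules, including the PRUNE rule, has no infinite branch. Consequently, any construction process of a tableau for $\phi$ terminates in a finished tableau, in which every leaf is ticked or crossed.
   Context: LTL formulas over a countable set $AP$ of atoms are built from atoms $p\in AP$ and the constant $\top$ using $\neg\alpha$, $\alpha\wedge\beta$, $X\alpha$ and $\alpha U\beta$. We write $\bot$ for $\neg\top$. A structure is a triple $(S,R,g)$ where $S$ is a finite set, $R\subseteq S\times S$ is serial (every state has an $R$-successor), and $g:S\to 2^{AP}$. A fullpath is a sequence $\sigma=\langle s_0,s_1,\dots\rangle$ with $(s_i,s_{i+1})\in R$ for all $i$. We write $\sigma_i=s_i$ and $\sigma_{\ge j}=\langle s_j,s_{j+1},\dots\rangle$. Truth is defined as follows: - $\sigma\models p$ iff $p\in g(\sigma_0)$; - $\sigma\models\top$ always; - $\neg$ and $\wedge$ are classical; - $\sigma\models X\alpha$ iff $\sigma_{\ge1}\models\alpha$; - $\sigma\models\alpha U\beta$ iff there is $i\ge0$ with $\sigma_{\ge i}\models\beta$ and $\sigma_{\ge j}\models\alpha$ for all $0\le j<i$. A formula is satisfiable iff it is true on some fullpath of some structure. Tableau. A tableau for $\phi$ is a finite rooted tree. Each node $u$ carries a finite set of formulas $\Gamma_u$ (its label), and the root is labelled $\{\phi\}$. We write $u<v$ when $u$ is a proper ancestor of $v$ and $u\le v$ when it is an ancestor or equal. A formula is elementary if it is an atom, a negated atom, or of the form $X\alpha$ or $\neg X\alpha$. A label is poised if it is nonempty, contains no pair $\alpha,\neg\alpha$,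 and all its formulas are elementary. An $X$-eventuality of a poised label is a member of the form $X(\alpha U\beta)$. Static rules are written ''parent label / children'', where $\{\chi\}\mathbin{\dot\cup}\Delta$ means $\chi\notin\Delta$: - EMPTY: $\{\}$ / tick. - CONTRADICTION: $\{\alpha,\neg\alpha\}\mathbin{\dot\cup}\Delta$ / cross. - $\neg\top$: $\{\neg\top\}\mathbin{\dot\cup}\Delta$ / cross. - $\top$: $\{\top\}\mathbin{\dot\cup}\Delta$ / $\Delta$. - $\wedge$: $\{\alpha\wedge\beta\}\mathbin{\dot\cup}\Delta$ / $\Delta\cup\{\alpha,\beta\}$. - $U$: $\{\alpha U\beta\}\mathbin{\dot\cup}\Delta$ / two children $\Delta\cup\{\beta\}$ and $\Delta\cup\{\alpha,X(\alpha U\beta)\}$. - $\neg\neg$: $\{\neg\neg\alpha\}\mathbin{\dot\cup}\Delta$ / $\Delta\cup\{\alpha\}$. - $\neg\wedge$: $\{\neg(\alpha\wedge\beta)\}\mathbin{\dot\cup}\Delta$ / two children $\Delta\cup\{\neg\alpha\}$ and $\Delta\cup\{\neg\beta\}$. - $\neg U$: $\{\neg(\alpha U\beta)\}\mathbin{\dot\cup}\Delta$ / two children $\Delta\cup\{\neg\alpha,\neg\beta\}$ and $\Delta\cup\{\neg\beta,X\neg(\alpha U\beta)\}$. Non-static rules apply only to a leaf $v$ with poised label. The first applicable one in the following list is used. - LOOP: if some $u<v$ has poised $\Gamma_u\supseteq\Gamma_v$, and for every $X(\alpha U\beta)\in\Gamma_u$ there is $w$ with $u<w\le v$ and $\beta\in\Gamma_w$,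 then $v$ is ticked. - PRUNE: if $u<v'<v$ all have the same poised label $\Gamma$, and for every $X(\alpha U\beta)\in\Gamma$, whenever some $x$ with $v'<x\le v$ has $\beta\in\Gamma_x$ there is $y$ with $u<y\le v'$ and $\beta\in\Gamma_y$, then $v$ is crossed. - PRUNE$_0$: if $u<v$ share the same poised label $\Gamma$, $\Gamma$ contains at least one $X$-eventuality, and for no $X(\alpha U\beta)\in\Gamma$ is there $x$ with $u<x\le v$ and $\beta\in\Gamma_x$, then $v$ is crossed. - TRANSITION: otherwise $v$ gets one child labelled $\{\alpha: X\alpha\in\Gamma_v\}\cup\{\neg\alpha:\neg X\alpha\in\Gamma_v\}$. A tableau is constructed from the root by repeatedly choosing any leaf that is neither ticked nor crossed and applying an applicable rule. For non-poised labels this means any applicable static rule to any suitable pivot formula. A tableau is finished if every leaf is ticked or crossed, and successful if some leaf is ticked. *)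

(* Defs.v *)
From Stdlib Require Import List Arith.
Import ListNotations.

Inductive form : Type :=
| Atom  : nat -> form
| Top   : form
| Neg   : form -> form
| And   : form -> form -> form
| Next  : form -> form
| Until : form -> form -> form.

(* A label is a finite set of formulas, represented by a list;
   only membership matters (labels are compared as sets). *)
Definition label := list form.

Definition seteq (G H : label) : Prop := forall x, In x G <-> In x H.

Definition elementary (f : form) : Prop :=
  match f with
  | Atom _ | Neg (Atom _) | Next _ | Neg (Next _) => True
  | _ => False
  end.

Definition poised (G : label) : Prop :=
  G <> [] /\
  (forall a, In a G -> ~ In (Neg a) G) /\
  (forall a, In a G -> elementary a).

(* Static rules producing children: for pivot chi, the list of children,
   each given by the list of formulas added to Delta = G \ {chi}.
   EMPTY, CONTRADICTION and neg-top produce a tick/cross (no child). *)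
Definition rule_children (chi : form) : list (list form) :=
  match chi with
  | Top => [ [] ]
  | And a b => [ [a; b] ]
  | Until a b => [ [b]; [a; Next (Until a b)] ]
  | Neg (Neg a) => [ [a] ]
  | Neg (And a b) => [ [Neg a]; [Neg b] ]
  | Neg (Until a b) => [ [Neg a; Neg b]; [Neg b; Next (Neg (Until a b))] ]
  | _ => []
  end.

Definition static_child (G H : label) : Prop :=
  exists chi adds, In chi G /\ In adds (rule_children chi) /\
    forall x, In x H <-> ((In x G /\ x <> chi) \/ In x adds).

(* Non-static rules at leaf index n of a branch g (g 0 = root, g i is the
   label of the i-th node on the branch; u < v means index u < index v). *)
Definition loop_app (g : nat -> label) (n : nat) : Prop :=
  exists u, u < n /\ poised (g u) /\ (forall x, In x (g n) -> In x (g u)) /\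
    forall a b, In (Next (Until a b)) (g u) ->
      exists w, u < w <= n /\ In b (g w).

Definition prune_app (g : nat -> label) (n : nat) : Prop :=
  exists u v', u < v' < n /\ poised (g n) /\
    seteq (g u) (g n) /\ seteq (g v') (g n) /\
    forall a b, In (Next (Until a b)) (g n) ->
      (exists x, v' < x <= n /\ In b (g x)) ->
      exists y, u < y <= v' /\ In b (g y).

Definition prune0_app (g : nat -> label) (n : nat) : Prop :=
  exists u, u < n /\ poised (g n) /\ seteq (g u) (g n) /\
    (exists a b, In (Next (Until a b)) (g n)) /\
    forall a b, In (Next (Until a b)) (g n) ->
      ~ (exists x, u < x <= n /\ In b (g x)).

Definition transition (G H : label) : Prop :=
  forall x, In x H <->
    (In (Next x) G \/ exists a, x = Neg a /\ In (Neg (Next a)) G).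

Definition tab_step (g : nat -> label) (n : nat) : Prop :=
  (~ poised (g n) /\ static_child (g n) (g (S n))) \/
  (poised (g n) /\ ~ loop_app g n /\ ~ prune_app g n /\ ~ prune0_app g n /\
   transition (g n) (g (S n))).

Definition is_root (phi : form) (g : nat -> label) : Prop := seteq (g 0) [phi].

(* Main.v *)
Require Import Defs.
From Stdlib Require Import List Arith Lia Classical ClassicalEpsilon.
Import ListNotations.

Definition dec (P : Prop) : bool := if excluded_middle_informative P then true else false.
Lemma decP (P : Prop) : (P /\ dec P = true) \/ (~ P /\ dec P = false).
Proof. unfold dec; destruct (excluded_middle_informative P); auto. Qed.
Lemma decT (P:Prop) : P -> dec P = true.
Proof. intros H; destruct (decP P) as [[_ E]|[N _]]; [exact E | contradiction]. Qed.
Lemma decF (P:Prop) : ~P -> dec P = false.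
Proof. intros H; destruct (decP P) as [[N _]|[_ E]]; [contradiction | exact E]. Qed.
Lemma dec_true (P:Prop) : dec P = true -> P.
Proof. intros E; destruct (decP P) as [[p _]|[_ E']]; [exact p| congruence]. Qed.

Lemma form_eq_dec : forall x y : form, {x = y} + {x <> y}.
Proof. decide equality; apply Nat.eq_dec. Qed.

Fixpoint sub (f : form) : list form :=
  f :: match f with
       | Atom _ | Top => []
       | Neg a | Next a => sub a
       | And a b | Until a b => sub a ++ sub b
       end.

Lemma sub_refl f : In f (sub f). Proof. destruct f; simpl; auto. Qed.

Lemma sub_trans x y z : In y (sub x) -> In z (sub y) -> In z (sub x).
Proof.
  induction x; simpl; intros H1 H2; destruct H1 as [<-|H1]; try (simpl in H2; exact H2);
  try contradiction; right;
  try (apply in_app_or in H1; apply in_or_app; destruct H1; [left; eauto| right; eauto]);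
  eauto.
Qed.

Lemma sub_neg phi a : In (Neg a) (sub phi) -> In a (sub phi).
Proof. intros; eapply sub_trans; [eassumption|simpl; right; apply sub_refl]. Qed.
Lemma sub_next phi a : In (Next a) (sub phi) -> In a (sub phi).
Proof. intros; eapply sub_trans; [eassumption|simpl; right; apply sub_refl]. Qed.
Lemma sub_and_l phi a b : In (And a b) (sub phi) -> In a (sub phi).
Proof. intros; eapply sub_trans; [eassumption|simpl; right; apply in_or_app; left; apply sub_refl]. Qed.
Lemma sub_and_r phi a b : In (And a b) (sub phi) -> In b (sub phi).
Proof. intros; eapply sub_trans; [eassumption|simpl; right; apply in_or_app; right; apply sub_refl]. Qed.
Lemma sub_until_l phi a b : In (Until a b) (sub phi) -> In a (sub phi).
Proof. intros; eapply sub_trans; [eassumption|simpl; right; apply in_or_app; left; apply sub_refl]. Qed.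
Lemma sub_until_r phi a b : In (Until a b) (sub phi) -> In b (sub phi).
Proof. intros; eapply sub_trans; [eassumption|simpl; right; apply in_or_app; right; apply sub_refl]. Qed.
#[local] Hint Resolve sub_neg sub_next sub_and_l sub_and_r sub_until_l sub_until_r : subh.

Definition gen (x:form) : list form := [x; Neg x; Next x; Neg (Next x); Next (Neg x)].
Definition clos phi := nodup form_eq_dec (flat_map gen (sub phi)).
Definition inC phi y := exists x, In x (sub phi) /\ In y (gen x).
Lemma clos_iff phi y : In y (clos phi) <-> inC phi y.
Proof. unfold clos, inC. rewrite nodup_In, in_flat_map. tauto. Qed.

Ltac solveC :=
  unfold inC;
  first [ eexists; split; [ | unfold gen; simpl; left; reflexivity ]; solve [eauto 4 with subh]
        | eexists; split; [ | unfold gen; simpl; right; left; reflexivity ]; solve [eauto 4 with subh]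
        | eexists; split; [ | unfold gen; simpl; right; right; left; reflexivity ]; solve [eauto 4 with subh]
        | eexists; split; [ | unfold gen; simpl; right; right; right; left; reflexivity ]; solve [eauto 4 with subh]
        | eexists; split; [ | unfold gen; simpl; right; right; right; right; left; reflexivity ]; solve [eauto 4 with subh] ].

Ltac split_or H := repeat match type of H with _ \/ _ => destruct H as [H|H] end.

Lemma static_clos phi chi adds y : inC phi chi -> In adds (rule_children chi) -> In y adds -> inC phi y.
Proof.
  intros [x [Hx Hg]] Ha Hy.
  destruct chi as [m| |c|c1 c2|c|c1 c2]; try destruct c as [m| |c|c1 c2|c|c1 c2];
  simpl in Ha; split_or Ha; try contradiction; subst adds; simpl in Hy; split_or Hy;
  try contradiction; subst y; unfold gen in Hg; simpl in Hg; split_or Hg; try contradiction;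
  try discriminate; try (injection Hg as Hg); subst; solveC.
Qed.

Lemma trans_clos phi G H : (forall x, In x G -> inC phi x) -> transition G H ->
  forall x, In x H -> inC phi x.
Proof.
  intros HG Ht x Hx. apply Ht in Hx. destruct Hx as [Hx|[a [-> Hx]]]; apply HG in Hx;
  destruct Hx as [x0 [Hx0 Hg]]; unfold gen in Hg; simpl in Hg; split_or Hg; try contradiction;
  try discriminate; try (injection Hg as Hg); subst; solveC.
Qed.

Fixpoint wt (f:form) : nat := match f with
| Atom _ => 0 | Top => 1 | Neg a => wn a | And a b => 1 + wt a + wt b | Next _ => 0
| Until a b => 1 + wt a + wt b end
with wn (f:form) : nat := match f with
| Atom _ => 0 | Top => 1 | Neg a => 1 + wt a | And a b => 1 + wn a + wn b | Next _ => 0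
| Until a b => 1 + wn a + wn b end.

Fixpoint fsize (f:form) : nat := match f with
| Atom _ | Top => 1 | Neg a | Next a => S (fsize a) | And a b | Until a b => S (fsize a + fsize b) end.

Fixpoint lsum {A} (f : A -> nat) (l : list A) : nat :=
  match l with [] => 0 | x :: l => f x + lsum f l end.

Lemma lsum_le {A} (f g : A -> nat) l : (forall x, In x l -> f x <= g x) -> lsum f l <= lsum g l.
Proof. induction l; simpl; intros H; auto. pose proof (H a (or_introl eq_refl)).
  assert (lsum f l <= lsum g l) by (apply IHl; auto). lia. Qed.
Lemma lsum_add_ext {A} (f g h : A -> nat) l : (forall x, h x = f x + g x) ->
  lsum h l = lsum f l + lsum g l.
Proof. intros H; induction l; simpl; auto. rewrite H, IHl; lia. Qed.
Lemma lsum_const {A} (l : list A) c : lsum (fun _ => c) l = length l * c.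
Proof. induction l; simpl; auto. Qed.

Lemma rc_not_in chi adds : In adds (rule_children chi) -> ~ In chi adds.
Proof.
  intros Ha Hin.
  destruct chi as [m| |c|c1 c2|c|c1 c2]; try destruct c as [m| |c|c1 c2|c|c1 c2];
  simpl in Ha; split_or Ha; try contradiction; subst adds; simpl in Hin; split_or Hin;
  try contradiction; apply (f_equal fsize) in Hin; simpl in Hin; lia.
Qed.

Lemma rc_weight chi adds : In adds (rule_children chi) -> lsum wt adds < wt chi.
Proof.
  intros Ha.
  destruct chi as [m| |c|c1 c2|c|c1 c2]; try destruct c as [m| |c|c1 c2|c|c1 c2];
  simpl in Ha; split_or Ha; try contradiction; subst adds; simpl; lia.
Qed.

Definition ind (P : Prop) (v : nat) := if dec P then v else 0.

Definition mu (C : list form) (G : label) := lsum (fun x => ind (In x G) (wt x)) C.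

Lemma lsum_eq0 a C : ~In a C -> lsum (fun x => ind (x = a) (wt x)) C = 0.
Proof. induction C; simpl; intros H; auto. unfold ind at 1. rewrite decF by (intro; apply H; auto).
  rewrite IHC; auto. Qed.

Lemma lsum_single a C : NoDup C -> In a C -> lsum (fun x => ind (x = a) (wt x)) C = wt a.
Proof. induction C; simpl; intros Hn Ha; [contradiction|]. inversion Hn; subst.
  destruct Ha as [<-|Ha]. unfold ind at 1; rewrite decT by auto. rewrite lsum_eq0; auto.
  unfold ind at 1; rewrite decF by (intros ->; auto). rewrite IHC; auto. Qed.

Lemma lsum_single_le a C : NoDup C -> lsum (fun x => ind (x = a) (wt x)) C <= wt a.
Proof. intros Hn. destruct (classic (In a C)). rewrite lsum_single; auto.
  rewrite lsum_eq0; auto; lia. Qed.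

Lemma lsum_inA C A : NoDup C -> lsum (fun x => ind (In x A) (wt x)) C <= lsum wt A.
Proof.
  intros Hn; induction A as [|a A IH]; cbn [lsum].
  - rewrite (lsum_add_ext (fun _ => 0) (fun _ => 0)). rewrite lsum_const. lia.
    intros x; unfold ind; rewrite decF; auto.
  - eapply Nat.le_trans.
    + apply (lsum_le _ (fun x => ind (x = a) (wt x) + ind (In x A) (wt x))).
      intros x _. unfold ind. destruct (decP (In x (a :: A))) as [[h1 ->]|[h1 ->]]; [|lia].
      destruct h1 as [h1|h1]; [rewrite (decT (x = a)) by auto; lia|rewrite (decT (In x A)) by auto; lia].
    + rewrite (lsum_add_ext (fun x => ind (x = a) (wt x)) (fun x => ind (In x A) (wt x))) by reflexivity.
      pose proof (lsum_single_le a C Hn). lia.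
Qed.

Lemma mu_le C G : mu C G <= lsum wt C.
Proof. apply lsum_le. intros x _; unfold ind; destruct (dec _); lia. Qed.

Lemma mu_static C G H : NoDup C -> (forall x, In x G -> In x C) -> static_child G H ->
  mu C H < mu C G.
Proof.
  intros Hn HG [chi [adds [Hchi [Ha Hiff]]]].
  pose proof (rc_not_in _ _ Ha) as Hni. pose proof (rc_weight _ _ Ha) as Hw.
  assert (Hp : forall x, ind (In x H) (wt x) + ind (x = chi) (wt x) <=
                         ind (In x G) (wt x) + ind (In x adds) (wt x)).
  { intros x; unfold ind.
    destruct (decP (In x H)) as [[h1 ->]|[h1 ->]]; destruct (decP (x = chi)) as [[h2 ->]|[h2 ->]];
    destruct (decP (In x G)) as [[h3 ->]|[h3 ->]]; destruct (decP (In x adds)) as [[h4 ->]|[h4 ->]];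
    try lia; exfalso; subst; firstorder. }
  assert (E1 := lsum_le _ _ C (fun x _ => Hp x)).
  rewrite (lsum_add_ext (fun x => ind (In x H) (wt x)) (fun x => ind (x = chi) (wt x))) in E1 by reflexivity.
  rewrite (lsum_add_ext (fun x => ind (In x G) (wt x)) (fun x => ind (In x adds) (wt x)) (fun x => ind (In x G) (wt x) + ind (In x adds) (wt x))) in E1 by reflexivity.
  rewrite lsum_single in E1 by auto.
  pose proof (lsum_inA C adds Hn). unfold mu. lia.
Qed.

Lemma labels_in phi g n : is_root phi g -> (forall i, i < n -> tab_step g i) ->
  forall i, i <= n -> forall x, In x (g i) -> In x (clos phi).
Proof.
  intros Hr Hs i; induction i; intros Hi x Hx; apply clos_iff.
  - apply Hr in Hx. destruct Hx as [<-|[]]. exists phi; split; [apply sub_refl| left; auto].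
  - assert (IH : forall x, In x (g i) -> inC phi x) by (intros; apply clos_iff; apply IHi; auto; lia).
    destruct (Hs i ltac:(lia)) as [[_ [chi [adds [Hc [Ha Hiff]]]]]|[_ [_ [_ [_ Ht]]]]].
    + apply Hiff in Hx. destruct Hx as [[Hx _]|Hx]; auto. eapply static_clos; eauto.
    + eapply trans_clos; eauto.
Qed.

Definition pick (C : list form) (G : label) := filter (fun x => dec (In x G)) C.

Lemma pick_seteq C G H : (forall x, In x G -> In x C) -> (forall x, In x H -> In x C) ->
  pick C G = pick C H -> seteq G H.
Proof.
  intros HG HH E x; split; intro Hx.
  - assert (Hp : In x (pick C G)) by (apply filter_In; split; [auto| apply decT; auto]).
    rewrite E in Hp; apply filter_In in Hp; apply dec_true; tauto.
  - assert (Hp : In x (pick C H)) by (apply filter_In; split; [auto| apply decT; auto]).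
    rewrite <- E in Hp; apply filter_In in Hp; apply dec_true; tauto.
Qed.

Fixpoint subseqs {A} (l : list A) : list (list A) :=
  match l with [] => [[]] | x :: l => map (cons x) (subseqs l) ++ subseqs l end.

Lemma filter_subseqs {A} (f : A -> bool) l : In (filter f l) (subseqs l).
Proof. induction l; simpl; auto. destruct (f a); apply in_or_app; [left; apply in_map; auto| right; auto]. Qed.

Fixpoint cntP (c : nat -> Prop) (k : nat) : nat :=
  match k with 0 => 0 | S k => cntP c k + (if dec (c k) then 1 else 0) end.

Lemma cntP_first c k : cntP c k = 0 \/ exists t, t < k /\ c t /\ cntP c t = 0.
Proof.
  induction k; simpl; auto. destruct IHk as [E|[t [H1 [H2 H3]]]].
  - destruct (decP (c k)) as [[h ->]|[h ->]]; [right; exists k; auto| left; lia].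
  - right; exists t; split; auto.
Qed.

Lemma one_le_lsum (D : list (list form)) (P : list form -> Prop) a : In a D -> P a ->
  1 <= lsum (fun S => if dec (P S) then 1 else 0) D.
Proof. induction D; simpl; intros Ha Hp; [contradiction|]. destruct Ha as [->|Ha].
  rewrite decT; auto; lia. specialize (IHD Ha Hp); lia. Qed.

Lemma pigeon (c : nat -> Prop) (cls : list form -> nat -> Prop) D k :
  (forall j, j < k -> c j -> exists S, In S D /\ cls S j) ->
  cntP c k <= lsum (fun S => cntP (cls S) k) D.
Proof.
  induction k; intros H; simpl. lia.
  rewrite (lsum_add_ext (fun S => cntP (cls S) k) (fun S => if dec (cls S k) then 1 else 0)) by reflexivity.
  assert (IH : cntP c k <= lsum (fun S => cntP (cls S) k) D) by (apply IHk; intros; apply H; auto; lia).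
  destruct (decP (c k)) as [[h ->]|[h ->]]; [|lia].
  destruct (H k ltac:(lia) h) as [S [HS1 HS2]].
  pose proof (one_le_lsum D (fun S => cls S k) S HS1 HS2). lia.
Qed.

Lemma filter_len_le {A} (f h : A -> bool) l : (forall x, In x l -> f x = true -> h x = true) ->
  length (filter f l) <= length (filter h l).
Proof. induction l; simpl; intros H; auto.
  destruct (f a) eqn:Ef; [rewrite (H a (or_introl eq_refl) Ef); simpl|destruct (h a); simpl];
  specialize (IHl (fun x Hx => H x (or_intror Hx))); lia. Qed.

Lemma filter_len_lt {A} (f h : A -> bool) l : (forall x, In x l -> f x = true -> h x = true) ->
  (exists x, In x l /\ f x = false /\ h x = true) ->
  length (filter f l) < length (filter h l).
Proof. induction l; simpl; intros H [x [Hx [Hf Hh]]]; [contradiction|].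
  assert (H' : forall x, In x l -> f x = true -> h x = true) by (intros; apply H; auto).
  destruct Hx as [<-|Hx].
  - rewrite Hf, Hh; simpl. pose proof (filter_len_le f h l H'); lia.
  - assert (length (filter f l) < length (filter h l)) by (apply IHl; eauto).
    destruct (f a) eqn:Ef; [rewrite (H a (or_introl eq_refl) Ef); simpl|destruct (h a); simpl]; lia.
Qed.

Lemma filter_len_bound {A} (f : A -> bool) l : length (filter f l) <= length l.
Proof. induction l; simpl; auto. destruct (f a); simpl; lia. Qed.

Lemma filter_all_false {A} (f : A -> bool) l : (forall x, In x l -> f x = false) -> filter f l = [].
Proof. induction l; simpl; intros H; auto. rewrite H by auto. apply IHl; auto. Qed.

Definition cls (C : list form) (g : nat -> label) (n : nat) (S : list form) (j : nat) : Prop :=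
  j < n /\ poised (g j) /\ pick C (g j) = S.

Definition evc (C : list form) (g : nat -> label) (t1 t : nat) : nat :=
  length (filter (fun x => dec ((exists a, In (Next (Until a x)) (g t1)) /\
                                exists w, t1 < w <= t /\ In x (g w))) C).

Fixpoint lastc (c : nat -> Prop) (t1 k : nat) : nat :=
  match k with 0 => t1 | S k => if dec (c k /\ t1 < k) then k else lastc c t1 k end.

Lemma lastc_small c t1 k : k <= S t1 -> lastc c t1 k = t1.
Proof. induction k; simpl; intros H; auto. rewrite decF by lia. apply IHk; lia. Qed.


Lemma cls_seteq C g n S j j' : (forall i, i <= n -> forall x, In x (g i) -> In x C) ->
  cls C g n S j -> cls C g n S j' -> seteq (g j) (g j').
Proof. intros Hs [h1 [_ h3]] [h1' [_ h3']]. apply (pick_seteq C); [apply Hs; lia|apply Hs; lia|congruence]. Qed.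

Lemma cls_steps C g n S j : (forall i, i < n -> tab_step g i) -> cls C g n S j ->
  ~ loop_app g j /\ ~ prune_app g j /\ ~ prune0_app g j.
Proof. intros Hst [h1 [h2 _]]. destruct (Hst j h1) as [[h _]|[_ [a [b [c _]]]]]; tauto. Qed.

Lemma factA C g n S t1 t : (forall i, i <= n -> forall x, In x (g i) -> In x C) ->
  (forall i, i < n -> tab_step g i) -> cls C g n S t1 -> cls C g n S t -> t1 < t ->
  1 <= evc C g t1 t.
Proof.
  intros Hs Hst H1 H Hlt.
  destruct (cls_steps C g n S t Hst H) as [Hnl [_ Hnp0]].
  pose proof (cls_seteq C g n S t t1 Hs H H1) as Heq.
  assert (Hev : exists a b, In (Next (Until a b)) (g t1)).
  { apply NNPP; intro Hne. apply Hnl. exists t1. split; [lia|]. split; [apply H1|]. split.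
    - intros x Hx; apply Heq; auto.
    - intros a b Hab; exfalso; apply Hne; eauto. }
  destruct (classic (exists a b, In (Next (Until a b)) (g t) /\ exists x, t1 < x <= t /\ In b (g x)))
    as [[a [b [Hab [x [Hx Hbx]]]]]|Hn].
  - assert (Hin : In b (filter (fun x => dec ((exists a, In (Next (Until a x)) (g t1)) /\
                                exists w, t1 < w <= t /\ In x (g w))) C)).
    { apply filter_In; split. apply (Hs x); [destruct H as [? _]; lia|auto].
      apply decT; split; [exists a; apply Heq; auto| exists x; auto]. }
    unfold evc. destruct (filter _ C); [contradiction|simpl; lia].
  - exfalso; apply Hnp0. exists t1. split; [lia|]. split; [apply H|]. split.
    + intro y; split; intro; apply Heq; auto.
    + destruct Hev as [a [b Hab]]. split; [exists a, b; apply Heq; auto|].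
      intros a' b' Hab' Hx. apply Hn; eauto.
Qed.

Lemma factB C g n S t1 t' t : (forall i, i <= n -> forall x, In x (g i) -> In x C) ->
  (forall i, i < n -> tab_step g i) -> cls C g n S t1 -> cls C g n S t' -> cls C g n S t ->
  t1 < t' -> t' < t -> evc C g t1 t' < evc C g t1 t.
Proof.
  intros Hs Hst H1 H' H Hlt1 Hlt2.
  destruct (cls_steps C g n S t Hst H) as [_ [Hnp _]].
  pose proof (cls_seteq C g n S t t1 Hs H H1) as Heq.
  pose proof (cls_seteq C g n S t' t Hs H' H) as Heq'.
  destruct (classic (exists a b, In (Next (Until a b)) (g t) /\
       (exists x, t' < x <= t /\ In b (g x)) /\ ~ exists y, t1 < y <= t' /\ In b (g y)))
    as [[a [b [Hab [[x [Hx Hbx]] Hny]]]]|Hn].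
  - unfold evc. apply filter_len_lt.
    + intros z _ Hz. apply dec_true in Hz. destruct Hz as [Hz1 [w [Hw1 Hw2]]].
      apply decT; split; auto; exists w; split; auto; lia.
    + exists b; split; [apply (Hs x); [destruct H as [? _]; lia|auto]|split].
      * apply decF. intros [_ Hy]; auto.
      * apply decT; split; [exists a; apply Heq; auto| exists x; split; auto; lia].
  - exfalso; apply Hnp. exists t1, t'. split; [lia|]. split; [apply H|]. split.
    + intro y; split; intro; apply Heq; auto.
    + split; [auto|]. intros a b Hab Hx. apply NNPP; intro Hy. apply Hn; eauto.
Qed.

Lemma evc0 C g t1 : evc C g t1 t1 = 0.
Proof. unfold evc. rewrite filter_all_false; auto. intros x _. apply decF. intros [_ [w [Hw _]]]; lia. Qed.

Lemma inv_last C g n S t1 : (forall i, i <= n -> forall x, In x (g i) -> In x C) ->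
  (forall i, i < n -> tab_step g i) -> cls C g n S t1 -> cntP (cls C g n S) t1 = 0 ->
  forall k, t1 < k -> cls C g n S (lastc (cls C g n S) t1 k) /\
    t1 <= lastc (cls C g n S) t1 k < k /\
    cntP (cls C g n S) k <= 1 + evc C g t1 (lastc (cls C g n S) t1 k).
Proof.
  intros Hs Hst H1 H0. induction k; intros Hk; [lia|].
  destruct (Nat.eq_dec t1 k) as [<-|Hne].
  - rewrite lastc_small by lia. rewrite evc0. simpl. rewrite H0, decT by auto. split; auto; lia.
  - destruct (IHk ltac:(lia)) as [Hc [Hb Hcnt]].
    simpl. destruct (decP (cls C g n S k)) as [[h ->]|[h ->]].
    + rewrite decT by (split; auto; lia). split; auto. split; [lia|].
      destruct (Nat.eq_dec (lastc (cls C g n S) t1 k) t1) as [E|E].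
      * rewrite E, evc0 in Hcnt. pose proof (factA C g n S t1 k Hs Hst H1 h ltac:(lia)). lia.
      * pose proof (factB C g n S t1 _ k Hs Hst H1 Hc h ltac:(lia) ltac:(lia)). lia.
    + rewrite decF by tauto. split; auto. split; [lia|]. lia.
Qed.

Lemma cls_bound C g n S : (forall i, i <= n -> forall x, In x (g i) -> In x C) ->
  (forall i, i < n -> tab_step g i) -> cntP (cls C g n S) n <= 1 + length C.
Proof.
  intros Hs Hst. destruct (cntP_first (cls C g n S) n) as [E|[t1 [Ht [Hc H0]]]]; [lia|].
  destruct (inv_last C g n S t1 Hs Hst Hc H0 n Ht) as [_ [_ Hb]].
  unfold evc in Hb. pose proof (filter_len_bound
    (fun x => dec ((exists a, In (Next (Until a x)) (g t1)) /\
       exists w, t1 < w <= lastc (cls C g n S) t1 n /\ In x (g w))) C). lia.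
Qed.

Lemma bound_branch phi g n : is_root phi g -> (forall i, i < n -> tab_step g i) ->
  n <= (length (subseqs (clos phi)) * (1 + length (clos phi))) * (1 + lsum wt (clos phi))
       + lsum wt (clos phi).
Proof.
  intros Hr Hst.
  set (C := clos phi). set (W := lsum wt C).
  assert (Hs : forall i, i <= n -> forall x, In x (g i) -> In x C) by (apply labels_in; auto).
  assert (Hnd : NoDup C) by apply NoDup_nodup.
  set (P := cntP (fun j => poised (g j))).
  assert (Hpot : forall i, i <= n -> i <= P i * (1 + W) + (W - mu C (g i))).
  { induction i; intros Hi; [lia|].
    specialize (IHi ltac:(lia)). unfold P in *; simpl.
    pose proof (mu_le C (g i)). pose proof (mu_le C (g (S i))).
    destruct (Hst i ltac:(lia)) as [[Hnp Hsc]|[Hp _]].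
    - rewrite decF by auto.
      pose proof (mu_static C (g i) (g (S i)) Hnd (Hs i ltac:(lia)) Hsc). lia.
    - rewrite decT by auto. nia. }
  assert (HP : P n <= lsum (fun S => cntP (cls C g n S) n) (subseqs C)).
  { apply pigeon. intros j Hj Hp. exists (pick C (g j)). split; [apply filter_subseqs|].
    split; auto. }
  assert (HB : lsum (fun S => cntP (cls C g n S) n) (subseqs C) <= length (subseqs C) * (1 + length C)).
  { rewrite <- lsum_const. apply lsum_le. intros S _. apply cls_bound; auto. }
  specialize (Hpot n (le_n n)). nia.
Qed.

Theorem mainTheorem3 (phi : form) :
  (* no infinite branch *)
  (~ exists g : nat -> label, is_root phi g /\ forall n, tab_step g n) /\
  (* hence every construction terminates: branch lengths are uniformly bounded *)
  (exists N : nat, forall (g : nat -> label) (n : nat),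
      is_root phi g -> (forall i, i < n -> tab_step g i) -> n <= N).
Proof.
  split.
  - intros [g [Hr Hst]].
    pose proof (bound_branch phi g (S ((length (subseqs (clos phi)) * (1 + length (clos phi))) * (1 + lsum wt (clos phi))
       + lsum wt (clos phi))) Hr (fun i _ => Hst i)). lia.
  - eexists. intros g n Hr Hst. apply (bound_branch phi g n Hr Hst).
Qed.
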